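(* Let $T$ be a tree with $n$ vertices and $m$ edges, maximum degree $\Delta$ and minimum degree $\delta$, and let $M_1(T)$ be its first Zagreb index. Then \[ \sigma(T)\geq M_1(T)-\frac{2mn^2(\Delta-1)+\delta-1}{n+\Delta}. \]
   Context: For a graph $G$ with $d_u$ the degree of $u$, the sigma index is $\sigma(G)=\sum_{uv\in E(G)}(d_u-d_v)^2$ and the first Zagreb index is $M_1(G)=\sum_{v\in V(G)} d_v^2$. *)

(* Defs.v *)
From mathcomp Require Import all_boot all_order all_algebra.
Set Implicit Arguments. Unset Strict Implicit. Unset Printing Implicit Defensive.
Import Order.TTheory GRing.Theory Num.Theory.

Definition simple_graph (T : finType) (e : rel T) : Prop :=
  symmetric e /\ irreflexive e.

Definition gconnected (T : finType) (e : rel T) : Prop :=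
  forall x y : T, connect e x y.

Definition acyclic (T : finType) (e : rel T) : Prop :=
  forall c : seq T, 3 <= size c -> uniq c -> ~~ cycle e c.

Definition is_tree (T : finType) (e : rel T) : Prop :=
  [/\ simple_graph e, gconnected e & acyclic e].

Definition deg (T : finType) (e : rel T) (x : T) : nat := #|[set y | e x y]|.

(* the edge set, each unordered edge {u,v} represented once as the ordered
   pair (u,v) with enum_rank u < enum_rank v *)
Definition oedges (T : finType) (e : rel T) : {set T * T} :=
  [set p : T * T | e p.1 p.2 && (enum_rank p.1 < enum_rank p.2)].

Definition nedges (T : finType) (e : rel T) : nat := #|oedges e|.

(* maximum and minimum degree (every degree is < #|T|, so #|T| is a
   neutral starting value for the minimum) *)
Definition maxdeg (T : finType) (e : rel T) : nat := \max_(x : T) deg e x.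
Definition mindeg (T : finType) (e : rel T) : nat :=
  \big[minn/#|T|]_(x : T) deg e x.

Local Open Scope ring_scope.

Definition sigma_index (R : numDomainType) (T : finType) (e : rel T) : R :=
  \sum_(p in oedges e) ((deg e p.1)%:R - (deg e p.2)%:R) ^+ 2.

Definition zagreb1 (R : numDomainType) (T : finType) (e : rel T) : R :=
  \sum_(x : T) ((deg e x)%:R) ^+ 2.

(* Main.v *)
Require Import Defs.
From mathcomp Require Import all_boot all_order all_algebra zify ring.
Import Order.TTheory GRing.Theory Num.Theory.
Set Implicit Arguments. Unset Strict Implicit.

Lemma deg_sum (T : finType) (e : rel T) x : deg e x = \sum_y (e x y : nat).
Proof. by rewrite /deg -sum1dep_card big_mkcond /=; apply: eq_bigr => y _; case: (e x y). Qed.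

Lemma handshake (T : finType) (e : rel T) : simple_graph e ->
  \sum_x deg e x = 2 * nedges e.
Proof.
case=> sym irr.
under eq_bigr do rewrite deg_sum.
rewrite pair_big /=.
have split : forall p : T * T, (e p.1 p.2 : nat) =
   (e p.1 p.2 && (enum_rank p.1 < enum_rank p.2))%N
   + (e p.2 p.1 && (enum_rank p.2 < enum_rank p.1))%N.
  move=> [x y] /=; rewrite (sym y x).
  case exy: (e x y) => //=.
  case: (ltngtP (enum_rank x) (enum_rank y)) => //= H.
  move/val_inj/enum_rank_inj: H => H; by rewrite H irr in exy.
rewrite (eq_bigr _ (fun p _ => split p)) big_split /=.
have -> : \sum_(p : T * T) (e p.2 p.1 && (enum_rank p.2 < enum_rank p.1) : nat)
   = \sum_(p : T * T) (e p.1 p.2 && (enum_rank p.1 < enum_rank p.2) : nat).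
  rewrite (reindex_inj (@inv_inj _ (fun p : T * T => (p.2, p.1)) _)) //=.
  by case.
have -> : \sum_(p : T * T) (e p.1 p.2 && (enum_rank p.1 < enum_rank p.2) : nat) = nedges e.
  rewrite /nedges /oedges -sum1dep_card [RHS]big_mkcond /=.
  by apply: eq_bigr => p _; case: (_ && _).
by rewrite mul2n addnn.
Qed.

Lemma deg_sub (T : finType) (e : rel T) x : irreflexive e ->
  [set y | e x y] \subset [set~ x].
Proof.
move=> irr; apply/subsetP => y; rewrite !inE => exy.
by apply/eqP => E; rewrite E irr in exy.
Qed.

Lemma deg_le (T : finType) (e : rel T) x : irreflexive e -> deg e x <= #|T|.-1.
Proof. by move=> irr; rewrite -(cardsC1 x); apply: subset_leq_card; apply: deg_sub. Qed.

Lemma deg_full (T : finType) (e : rel T) x y : irreflexive e ->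
  deg e x = #|T|.-1 -> y != x -> e x y.
Proof.
move=> irr dx yx.
have /eqP E : [set y | e x y] == [set~ x].
  by rewrite eqEcard deg_sub //= cardsC1 -dx.
have : y \in [set~ x] by rewrite !inE.
by rewrite -E inE.
Qed.

Lemma closed_all (T : finType) (e : rel T) (S : {set T}) x0 :
  gconnected e -> x0 \in S -> (forall x y, x \in S -> e x y -> y \in S) ->
  forall y, y \in S.
Proof.
move=> con x0S cl y.
have /connectP [p pth ->] := con x0 y.
elim: p x0 x0S pth => [|z p IH] x xS //= /andP [exz pth].
exact: IH (cl _ _ xS exz) pth.
Qed.

Lemma deg_ge1 (T : finType) (e : rel T) x : is_tree e -> (1 < #|T|)%N -> 0 < deg e x.
Proof.
move=> [[sym irr] con _] n2.
rewrite lt0n; apply/negP => /eqP d0.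
have [y yx] : exists y, y \in [set~ x].
  by apply/card_gt0P; rewrite cardsC1; lia.
have nb : forall z, ~~ e x z.
  move=> z; apply/negP => exz.
  have : z \in [set y | e x y] by rewrite inE.
  by move/card0_eq: d0 => ->.
have cl : forall a b, a \in [set x] -> e a b -> b \in [set x].
  move=> a b; rewrite inE => /eqP -> exb.
  by rewrite (negbTE (nb b)) in exb.
have := closed_all con (set11 x) cl y.
by rewrite !inE in yx *; rewrite (negbTE yx).
Qed.

Lemma deg_ge2 (T : finType) (e : rel T) : is_tree e -> (2 < #|T|)%N ->
  exists x, 1 < deg e x.
Proof.
move=> [[sym irr] con _] n3.
case: (boolP [exists x, 1 < deg e x]) => [/existsP//|]; rewrite negb_exists => /forallP Hd.
have dle : forall z, deg e z <= 1 by move=> z; have := Hd z; rewrite -leqNgt.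
have [x _] : exists x, x \in [set: T] by apply/card_gt0P; rewrite cardsT; lia.
pose S := x |: [set y | e x y].
have cl : forall a b, a \in S -> e a b -> b \in S.
  move=> a b; rewrite !inE => /orP [/eqP -> | exa] eab.
    by rewrite eab orbT.
  case: (eqVneq b x) => [->|bx]; first by rewrite ?eqxx.
  exfalso.
  have : 2 <= deg e a.
    have <- : #|[set x; b]| = 2 by rewrite cards2 eq_sym bx.
    apply: subset_leq_card; apply/subsetP => z; rewrite !inE.
    by case/orP => /eqP ->; rewrite // sym.
  by have := dle a; lia.
have cS : #|S| <= 2.
  by rewrite cardsU1; have := dle x; rewrite /deg; case: (_ \notin _) => /=; lia.
have [y yS] : exists y, y \in ~: S.
  by apply/card_gt0P; rewrite cardsCs setCK; lia.
have := closed_all con (setU11 x _) cl y.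
by rewrite inE in yS; rewrite (negbTE yS).
Qed.

Lemma deg_le1_n3 (T : finType) (e : rel T) : is_tree e -> #|T| = 3 ->
  exists x, deg e x <= 1.
Proof.
move=> [[sym irr] con acy] n3.
case: (boolP [exists x, deg e x <= 1]) => [/existsP//|]; rewrite negb_exists => /forallP Hd.
have dfull : forall z, deg e z = #|T|.-1.
  move=> z; have := Hd z; have := deg_le z irr; rewrite n3 /=; lia.
have := enum_uniq T; have := cardE T; rewrite n3.
case: (enum T) => [|a [|b [|c [|d s]]]] //= _.
rewrite !inE !negb_or => /and3P [/andP [ab ac] bc _].
move: (acy [:: a; b; c] isT) => /=; rewrite !inE !negb_or ab ac bc /=.
have E : forall u v, v != u -> e u v by move=> u v; apply: deg_full.
rewrite !E // ?(eq_sym a c) // ?(eq_sym b a) ?(eq_sym c b) //; by move=> /(_ isT).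
Qed.

Lemma nat_main (T : finType) (e : rel T) : is_tree e -> (2 < #|T|)%N ->
  (\sum_x deg e x ^ 2) * (#|T| + maxdeg e) <=
   2 * nedges e * #|T| ^ 2 * (maxdeg e - 1) + (mindeg e - 1).
Proof.
move=> tr n3; have [[sym irr] con acy] := tr.
have hs := handshake (conj sym irr).
set n := #|T| in n3 hs *; set m := nedges e in hs *.
set D := maxdeg e; set d := mindeg e; set M := \sum_x deg e x ^ 2.
have dleD : forall x, deg e x <= D by move=> x; apply: leq_bigmax.
have Dle : D <= n.-1 by apply/bigmax_leqP => x _; apply: deg_le.
have D2 : 2 <= D by have [x Hx] := deg_ge2 tr n3; apply: leq_trans Hx (dleD x).
have d1 : 1 <= d.
  apply: (big_ind (fun k => 1 <= k)).
  - by rewrite -/n; lia.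
  - by move=> a b; lia.
  - by move=> x _; apply: deg_ge1 => //; lia.
case: (eqVneq n 3) => [En|Nn].
  have ED : D = 2 by rewrite En in Dle; lia.
  have [x dx] := deg_le1_n3 tr En.
  have hm : \sum_y deg e y + 1 <= \sum_(y : T) 2.
    rewrite (bigD1 x) //= [X in _ <= X](bigD1 x) //=.
    have : \sum_(y | y != x) deg e y <= \sum_(y | y != x) 2.
      by apply: leq_sum => y _; have := dleD y; lia.
    lia.
  rewrite sum_nat_const cardT -cardE -/n En in hm.
  have hM : M + \sum_(y : T) 2 <= \sum_y 3 * deg e y.
    rewrite /M -big_split /=; apply: leq_sum => y _.
    have := dleD y; have : 1 <= deg e y by apply: deg_ge1 => //; lia.
    nia.
  rewrite sum_nat_const cardT -cardE -/n En -big_distrr /= hs in hM.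
  rewrite En ED; lia.
have hM : M <= D * (2 * m).
  rewrite -hs big_distrr /=; apply: leq_sum => y _.
  by rewrite leq_mul2r dleD orbT.
have key : D * (n + D) <= n ^ 2 * (D - 1) by nia.
nia.
Qed.
Local Open Scope ring_scope.

Theorem theorem4p5 (R : realFieldType) (T : finType) (e : rel T) :
  is_tree e -> (2 < #|T|)%N ->
  let n : R := (#|T|)%:R in
  let m : R := (nedges e)%:R in
  let Delta : R := (maxdeg e)%:R in
  let delta : R := (mindeg e)%:R in
  sigma_index R e >=
    zagreb1 R e - (2 * m * n ^+ 2 * (Delta - 1) + delta - 1) / (n + Delta).
Proof.
move=> tr n3.
rewrite [in X in is_true X]/=.
set n : R := (#|T|)%:R; set m : R := (nedges e)%:R; set Delta : R := (maxdeg e)%:R; set delta : R := (mindeg e)%:R.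
have H := nat_main tr n3.
have D1 : (1 <= maxdeg e)%N.
  have [x _] : exists x, x \in [set: T] by apply/card_gt0P; rewrite cardsT; lia.
  have h1 : (0 < deg e x)%N by apply: deg_ge1 => //; lia.
  rewrite /maxdeg; apply: (leq_trans h1). exact: leq_bigmax.
have d1 : (1 <= mindeg e)%N.
  apply: (big_ind (fun k => 1 <= k)%N); first lia; first by move=> a b; lia.
  by move=> x _; apply: deg_ge1 => //; lia.
have s0 : 0 <= sigma_index R e.
  by apply: sumr_ge0 => p _; apply: sqr_ge0.
rewrite lerBlDr; apply: ler_wpDl => //.
have pos : 0 < n + Delta by rewrite /n /Delta -natrD ltr0n; lia.
rewrite ler_pdivlMr //.
have -> : zagreb1 R e = (\sum_x deg e x ^ 2)%N%:R.
  by rewrite /zagreb1 natr_sum; apply: eq_bigr => x _; rewrite natrX.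
have -> : 2 * m * n ^+ 2 * (Delta - 1) + delta - 1 =
   (2 * nedges e * #|T| ^ 2 * (maxdeg e - 1) + (mindeg e - 1))%N%:R.
  rewrite natrD !natrM ?natrX (natrB _ D1) (natrB _ d1) /m /n /Delta /delta; ring.
by rewrite /n /Delta -natrD -natrM ler_nat.
Qed.
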